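(* Let $A\subseteq B$ be an extension of commutative rings, and regard $B$ as a subring of $B\otimes_A B$ via $b\mapsto b\otimes 1$. Then $\mathfrak{C}(A,B)=\mathfrak{C}(A,B\otimes_AB)$; that is, the canonical map $\mathfrak{C}(A,B)\to\mathfrak{C}(A,B\otimes_AB)$ induced by the inclusion of groups of invertible ideals is an isomorphism.
   Context: For an extension of rings $R\subseteq S$ and $R$-submodules $L,L'$ of $S$, $LL'$ is the $R$-submodule of finite sums $\sum x_ky_k$. An $R$-submodule $L$ of $S$ is an invertible ideal of $R\subseteq S$ if $LL'=R$ for some $R$-submodule $L'$ of $S$; these form an abelian group $\mathscr{G}(R,S)$ and $\mathfrak{C}(R,S)=\mathscr{G}(R,S)/\{Rx: x\in S^\ast\}$. *)

(* Defs.v *)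
From HB Require Import structures.
From mathcomp Require Import all_boot all_algebra.
Set Implicit Arguments. Unset Strict Implicit. Unset Printing Implicit Defensive.
Import GRing.Theory.
Local Open Scope ring_scope.

Definition seteq (S : Type) (X Y : S -> Prop) : Prop := forall x, X x <-> Y x.

Definition subring (S : comPzRingType) (A : S -> Prop) : Prop :=
  A 1 /\ (forall x y, A x -> A y -> A (x - y)) /\ (forall x y, A x -> A y -> A (x * y)).

Definition submod (S : comPzRingType) (R L : S -> Prop) : Prop :=
  L 0 /\ (forall x y, L x -> L y -> L (x + y)) /\
  (forall r x, R r -> L x -> L (r * x)).

Definition prodm (S : comPzRingType) (L L' : S -> Prop) : S -> Prop :=
  fun z => exists s : seq (S * S),
    (forall p, p \in s -> L p.1 /\ L' p.2) /\ z = \sum_(p <- s) p.1 * p.2.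

Definition invertible (S : comPzRingType) (R L : S -> Prop) : Prop :=
  submod R L /\ exists L', submod R L' /\ seteq (prodm L L') R.

Definition principal (S : comPzRingType) (R : S -> Prop) (x : S) : S -> Prop :=
  fun z => exists r, R r /\ z = r * x.

(* L and M define the same class in C(R,S) = G(R,S)/{Rx : x in S^*},
   i.e. L = M (Rx) for some unit x of S *)
Definition class_eq (S : comPzRingType) (R L M : S -> Prop) : Prop :=
  exists x : S, (exists y : S, x * y = 1) /\ seteq L (prodm M (principal R x)).

Definition img (S T : Type) (f : S -> T) (L : S -> Prop) : T -> Prop :=
  fun t => exists s, L s /\ t = f s.

(* (T, i1, i2) is the tensor product B ⊗_A B of commutative rings, i.e. the
   pushout of B <- A -> B in commutative rings (universal property), with
   i1 b = b ⊗ 1 and i2 b = 1 ⊗ b. *)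
Definition is_tensor_square (B T : comPzRingType) (A : B -> Prop)
    (i1 i2 : {rmorphism B -> T}) : Prop :=
  (forall a, A a -> i1 a = i2 a) /\
  forall (C : comPzRingType) (g1 g2 : {rmorphism B -> C}),
    (forall a, A a -> g1 a = g2 a) ->
    exists h : {rmorphism T -> C},
      ((forall b, h (i1 b) = g1 b) /\ (forall b, h (i2 b) = g2 b)) /\
      forall h' : {rmorphism T -> C},
        (forall b, h' (i1 b) = g1 b) -> (forall b, h' (i2 b) = g2 b) ->
        forall t, h' t = h t.

(* Main.v *)
Require Import Defs.
From HB Require Import structures.
From mathcomp Require Import all_boot all_algebra.
Local Open Scope ring_scope.
Import GRing.Theory.
Set Implicit Arguments. Unset Strict Implicit.

Lemma seteq_sym (S : Type) (X Y : S -> Prop) : seteq X Y -> seteq Y X.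
Proof. by move=> H x; split=> /H. Qed.

Lemma seteq_trans (S : Type) (X Y Z : S -> Prop) :
  seteq X Y -> seteq Y Z -> seteq X Z.
Proof. by move=> H1 H2 x; split=> [/H1/H2|/H2/H1]. Qed.

Lemma img_seteq (S S' : Type) (f : S -> S') (X Y : S -> Prop) :
  seteq X Y -> seteq (img f X) (img f Y).
Proof.
by move=> H z; split=> -[w [Hw ->]]; exists w; split=> //; apply/H.
Qed.

Lemma img_comp_id (S S' : Type) (f : S -> S') (g : S' -> S) (X : S -> Prop) :
  (forall x, g (f x) = x) -> seteq (img g (img f X)) X.
Proof.
move=> H z; split.
- by move=> [w [[v [Hv ->]] ->]]; rewrite H.
- by move=> Hz; exists (f z); split; [exists z | rewrite H].
Qed.

Lemma prodm_seteq (S : comPzRingType) (L L2 M M2 : S -> Prop) :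
  seteq L L2 -> seteq M M2 -> seteq (prodm L M) (prodm L2 M2).
Proof.
move=> HL HM z; split=> -[s [Hs ->]]; exists s; split=> // p /Hs [h1 h2].
- by split; [apply/HL | apply/HM].
- by split; [apply/HL | apply/HM].
Qed.

Lemma img_prodm (S S' : comPzRingType) (f : {rmorphism S -> S'}) (L M : S -> Prop) :
  seteq (img f (prodm L M)) (prodm (img f L) (img f M)).
Proof.
move=> z; split.
- move=> [w [[s [Hs ->]] ->]].
  exists (map (fun p => (f p.1, f p.2)) s); split.
  + move=> p /mapP [q Hq ->] /=. have [h1 h2] := Hs q Hq.
    by split; [exists q.1 | exists q.2].
  + by rewrite big_map rmorph_sum; apply: eq_bigr => p _; rewrite rmorphM.
- move=> [s [Hs ->]].
  elim: s Hs => [|p s IH] Hs.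
  + exists 0; split; last by rewrite big_nil rmorph0.
    by exists [::]; split=> //; rewrite big_nil.
  + have [[l [Hl El]] [m [Hm Em]]] := Hs p (mem_head _ _).
    have [w [[s' [Hs' Ew]] Efw]] :=
      IH (fun q Hq => Hs q (ltac:(by rewrite in_cons Hq orbT))).
    exists (l * m + w); split.
    * exists ((l,m) :: s'); split.
      -- move=> q; rewrite in_cons => /orP [/eqP -> | Hq] //. by apply Hs'.
      -- by rewrite big_cons Ew.
    * by rewrite big_cons rmorphD rmorphM -El -Em Efw.
Qed.

Lemma sum_in (S : comPzRingType) (R N : S -> Prop) (s : seq (S * S)) (F : S * S -> S) :
  submod R N -> (forall p, p \in s -> N (F p)) -> N (\sum_(p <- s) F p).
Proof.
move=> [H0 [HD _]]; elim: s => [|p s IH] H; first by rewrite big_nil.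
rewrite big_cons; apply: HD; first by apply: H; exact: mem_head.
by apply: IH => q Hq; apply: H; rewrite in_cons Hq orbT.
Qed.

Lemma retraction (B T : comPzRingType) (A : B -> Prop)
    (i1 i2 : {rmorphism B -> T}) :
  is_tensor_square A i1 i2 -> exists mu : {rmorphism T -> B}, forall b, mu (i1 b) = b.
Proof.
move=> [_ H]; have [h [[h1 _] _]] := H B idfun idfun (fun _ _ => erefl).
by exists h.
Qed.

Lemma img_principal (S S' : comPzRingType) (f : {rmorphism S -> S'}) (R : S -> Prop) x :
  seteq (img f (principal R x)) (principal (img f R) (f x)).
Proof.
move=> z; split.
- by move=> [w [[r [Hr ->]] ->]]; exists (f r); split; [exists r | rewrite rmorphM].
- move=> [r [[a [Ha ->]] ->]]; exists (a * x); split; last by rewrite rmorphM.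
  by exists a.
Qed.

Lemma principal_seteq (S : comPzRingType) (R R' : S -> Prop) x :
  seteq R R' -> seteq (principal R x) (principal R' x).
Proof.
by move=> H z; split=> -[r [Hr ->]]; exists r; split=> //; apply/H.
Qed.

Theorem corollary5p14 (B T : comPzRingType) (A : B -> Prop)
    (i1 i2 : {rmorphism B -> T}) :
  subring A -> is_tensor_square A i1 i2 ->
  let AT := img i1 A in
  (* inclusion G(A,B) -> G(A,T) *)
  (forall L, invertible A L -> invertible AT (img i1 L)) /\
  (* it is a homomorphism *)
  (forall L M, invertible A L -> invertible A M ->
     seteq (img i1 (prodm L M)) (prodm (img i1 L) (img i1 M))) /\
  (* it induces a well-defined map on class groups *)
  (forall L M, invertible A L -> invertible A M ->
     class_eq A L M -> class_eq AT (img i1 L) (img i1 M)) /\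
  (* injective on class groups *)
  (forall L M, invertible A L -> invertible A M ->
     class_eq AT (img i1 L) (img i1 M) -> class_eq A L M) /\
  (* surjective on class groups *)
  (forall N, invertible AT N ->
     exists L, invertible A L /\ class_eq AT N (img i1 L)).
Proof.
move=> HA Ht AT.
have [mu Hmu] := retraction Ht.
have HAT1 : AT 1 by exists 1; split; [case: HA | rewrite rmorph1].
have inv1 : forall L, invertible A L -> invertible AT (img i1 L).
  move=> L [[H0 [HD HM]] [L' [HL' HLL']]]; split.
  - split; first by exists 0; split=> //; rewrite rmorph0.
    split.
    + by move=> x y [a [Ha ->]] [b [Hb ->]]; exists (a + b); split; [apply: HD | rewrite rmorphD].
    + by move=> r x [a [Ha ->]] [b [Hb ->]]; exists (a * b); split; [apply: HM | rewrite rmorphM].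
  - exists (img i1 L'); split.
    + case: HL' => [H0' [HD' HM']].
      split; first by exists 0; split=> //; rewrite rmorph0.
      split.
      * by move=> x y [a [Ha ->]] [b [Hb ->]]; exists (a + b); split; [apply: HD' | rewrite rmorphD].
      * by move=> r x [a [Ha ->]] [b [Hb ->]]; exists (a * b); split; [apply: HM' | rewrite rmorphM].
    + apply: seteq_trans (seteq_sym (img_prodm i1 L L')) _.
      exact: img_seteq.
split; first exact: inv1.
split; first by move=> L M _ _; apply: img_prodm.
split.
  move=> L M _ _ [x [[y Hxy] HL]]; exists (i1 x); split.
    by exists (i1 y); rewrite -rmorphM Hxy rmorph1.
  apply: seteq_trans (img_seteq i1 HL) _.
  apply: seteq_trans (img_prodm _ _ _) _.
  apply: prodm_seteq; last exact: img_principal.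
  by move=> z.
split.
  move=> L M _ _ [x [[y Hxy] HL]]; exists (mu x); split.
    by exists (mu y); rewrite -rmorphM Hxy rmorph1.
  apply: seteq_trans (seteq_sym (img_comp_id L Hmu)) _.
  apply: seteq_trans (img_seteq mu HL) _.
  apply: seteq_trans (img_prodm _ _ _) _.
  apply: prodm_seteq; first exact: img_comp_id.
  apply: seteq_trans (img_principal _ _ _) _.
  apply: principal_seteq; exact: img_comp_id.
move=> N [HN [N' [HN' HNN']]].
have [s [Hs E1]] : prodm N N' 1 by apply/HNN'.
set z := \sum_(p <- s) p.1 * i1 (mu p.2).
set y := \sum_(p <- s) i1 (mu p.1) * p.2.
have K : forall n, N n -> i1 (mu n) * z = n.
  move=> n Hn; rewrite /z big_distrr /=.
  have -> : \sum_(p <- s) i1 (mu n) * (p.1 * i1 (mu p.2)) = \sum_(p <- s) p.1 * (n * p.2).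
    apply: eq_big_seq => p Hp.
    have Hnp : AT (n * p.2).
      apply/HNN'; exists [:: (n, p.2)]; split; last by rewrite big_seq1.
      by move=> q; rewrite inE => /eqP -> /=; split=> //; case: (Hs p Hp).
    case: Hnp => a [Ha Ea].
    by rewrite mulrCA -rmorphM -rmorphM Ea Hmu.
  under eq_bigr => p _ do rewrite mulrCA.
  by rewrite -big_distrr /= -E1 mulr1.
have Hzy : z * y = 1.
  rewrite /y big_distrr /= E1; apply: eq_big_seq => p Hp.
  by rewrite mulrA [z * _]mulrC K //; case: (Hs p Hp).
have [HN0 [HND HNM]] := HN.
have [HN0' [HND' HNM']] := HN'.
exists (img mu N); split.
  split.
    split; first by exists 0; split=> //; rewrite rmorph0.
    split.
    + by move=> x x' [a [Ha ->]] [b [Hb ->]]; exists (a + b); split; [apply: HND | rewrite rmorphD].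
    + move=> r x Hr [b [Hb ->]]; exists (i1 r * b); split; last by rewrite rmorphM Hmu.
      by apply: HNM => //; exists r.
  exists (img mu N'); split.
    split; first by exists 0; split=> //; rewrite rmorph0.
    split.
    + by move=> x x' [a [Ha ->]] [b [Hb ->]]; exists (a + b); split; [apply: HND' | rewrite rmorphD].
    + move=> r x Hr [b [Hb ->]]; exists (i1 r * b); split; last by rewrite rmorphM Hmu.
      by apply: HNM' => //; exists r.
  apply: seteq_trans (seteq_sym (img_prodm mu N N')) _.
  apply: seteq_trans (img_seteq mu HNN') _.
  exact: img_comp_id.
exists z; split; first by exists y.
move=> w; split.
  move=> Hw; exists [:: (i1 (mu w), 1 * z)]; split.
    move=> q; rewrite inE => /eqP -> /=; split.
      by exists (mu w); split=> //; exists w.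
    by exists 1.
  by rewrite big_seq1 /= mul1r K.
move=> [t [Htl ->]]; apply: (sum_in (F := fun p => p.1 * p.2) HN) => p Hp.
have [[m [[n [Hn ->]] ->]] [r [Hr ->]]] := Htl p Hp.
by rewrite mulrCA K //; apply: HNM.
Qed.
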